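(* Let $a,b$ be positive integers. A positive integer $p$ is the period of some position of the parallel chip-firing game on $K_{a,b}$ if and only if $p\in\{i: 1\le i\le\min(a,b)\}\cup\{2i: 1\le i\le\min(a,b)\}$.
   Context: Parallel chip-firing game: a position $\sigma$ assigns a nonnegative integer to each vertex; in each step every vertex $v$ with $\sigma(v)\ge\deg(v)$ simultaneously sends one chip to each neighbor. $K_{a,b}$ is the complete bipartite graph with sides of sizes $a$ and $b$. The period $p(\sigma)$ is the least positive integer $p$ such that $U^{t+p}\sigma=U^t\sigma$ for all sufficiently large $t$, where $U$ is the step operator. *)

(* Defs.v *)
From mathcomp Require Import all_boot.
Set Implicit Arguments. Unset Strict Implicit. Unset Printing Implicit Defensive.

(* A simple graph is a symmetric irreflexive relation [e] on a finite type [V].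
   A position assigns a number of chips to each vertex. *)
Definition position (V : finType) := {ffun V -> nat}.

Definition deg (V : finType) (e : rel V) (v : V) : nat := #|[pred u | e v u]|.

Definition fires (V : finType) (e : rel V) (s : position V) (v : V) : bool :=
  deg e v <= s v.

Definition step (V : finType) (e : rel V) (s : position V) : position V :=
  [ffun v => s v - (if fires e s v then deg e v else 0)
             + #|[pred u | e v u && fires e s u]|].

Definition iterU (V : finType) (e : rel V) (t : nat) (s : position V) :=
  iter t (step e) s.

Definition eventually_periodic_with (V : finType) (e : rel V)
    (s : position V) (p : nat) : Prop :=
  exists T, forall t, T <= t -> iterU e (t + p) s = iterU e t s.

Definition is_period (V : finType) (e : rel V) (s : position V) (p : nat) : Prop :=
  0 < p /\ eventually_periodic_with e s p /\
  (forall q, 0 < q -> q < p -> ~ eventually_periodic_with e s q).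

Definition Kab_vert (a b : nat) : finType := ('I_a + 'I_b)%type.

Definition Kab (a b : nat) : rel (Kab_vert a b) :=
  fun x y => match x, y with
             | inl _, inr _ => true
             | inr _, inl _ => true
             | _, _ => false
             end.
Arguments Kab : clear implicits.

(* Main.v *)
From Stdlib Require Import Lia Classical.
Require Import Defs.
From mathcomp Require Import all_boot.
Set Implicit Arguments. Unset Strict Implicit. Unset Printing Implicit Defensive.



Ltac slia := intros; repeat match goal with
 | H : (_ <= _) = false |- _ => move/negbT: H => H
 | H : (_ <= _) = true |- _ => change (is_true (_ <= _)) in H
 | H : is_true (_ <= _) |- _ => move/leP: H => H
 | H : is_true (~~ (_ <= _)) |- _ => rewrite -ltnNge in H
 | H : ~ is_true (_ <= _) |- _ => move/negP: H => H
 | H : is_true (?x == ?y) |- _ => match type of x with nat => move/eqP: H => H end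
 | H : (?x == ?y) = true |- _ => match type of x with nat => move/eqP: H => H end
 | H : (?x == ?y) = false |- _ => match type of x with nat => move/negbT/eqP: H => H end
 | H : is_true (~~ (?x == ?y)) |- _ => match type of x with nat => move/eqP: H => H end
 | |- is_true (_ <= _) => apply/leP
 | |- is_true (~~ (_ <= _)) => rewrite -ltnNge
 | |- ~ is_true (_ <= _) => apply/negP
 | |- is_true (?x == ?y) => match type of x with nat => apply/eqP end
 | |- is_true (~~ (?x == ?y)) => match type of x with nat => apply/eqP end
 end; unfold addn, subn, muln, double in *; first [lia | nia].

Lemma card_Kab_inl a b (u : 'I_a) (P : pred (Kab_vert a b)) :
  #|[pred y | Kab a b (inl u) y && P y]| = #|[pred w : 'I_b | P (inr w)]|.
Proof.
rewrite -(card_image (@inr_inj 'I_a 'I_b)).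
apply: eq_card => y; rewrite !inE.
case: y => [v|w] /=.
  apply/esym/negbTE/imageP => -[x _ //].
by rewrite (mem_image (@inr_inj 'I_a 'I_b)) inE.
Qed.

Lemma card_Kab_inr a b (w : 'I_b) (P : pred (Kab_vert a b)) :
  #|[pred y | Kab a b (inr w) y && P y]| = #|[pred u : 'I_a | P (inl u)]|.
Proof.
rewrite -(card_image (@inl_inj 'I_a 'I_b)).
apply: eq_card => y; rewrite !inE.
case: y => [v|v] /=.
  by rewrite (mem_image (@inl_inj 'I_a 'I_b)) inE.
apply/esym/negbTE/imageP => -[x _ //].
Qed.

Lemma deg_inl a b (u : 'I_a) : deg (Kab a b) (inl u) = b.
Proof.
rewrite /deg.
transitivity #|[pred y | Kab a b (inl u) y && true]|.
  by apply: eq_card => y; rewrite !inE andbT.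
by rewrite card_Kab_inl -[RHS](card_ord b); apply: eq_card.
Qed.

Lemma deg_inr a b (w : 'I_b) : deg (Kab a b) (inr w) = a.
Proof.
rewrite /deg.
transitivity #|[pred y | Kab a b (inr w) y && true]|.
  by apply: eq_card => y; rewrite !inE andbT.
by rewrite card_Kab_inr -[RHS](card_ord a); apply: eq_card.
Qed.

Definition FA a b (s : position (Kab_vert a b)) : nat :=
  #|[pred u : 'I_a | b <= s (inl u)]|.
Definition FB a b (s : position (Kab_vert a b)) : nat :=
  #|[pred w : 'I_b | a <= s (inr w)]|.

Lemma step_inl a b (s : position (Kab_vert a b)) (u : 'I_a) :
  step (Kab a b) s (inl u) = s (inl u) - (if b <= s (inl u) then b else 0) + FB s.
Proof.
rewrite ffunE /fires deg_inl card_Kab_inl /FB.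
by congr (_ + _); apply: eq_card => w; rewrite !inE /fires deg_inr.
Qed.

Lemma step_inr a b (s : position (Kab_vert a b)) (w : 'I_b) :
  step (Kab a b) s (inr w) = s (inr w) - (if a <= s (inr w) then a else 0) + FA s.
Proof.
rewrite ffunE /fires deg_inr card_Kab_inr /FA.
by congr (_ + _); apply: eq_card => u; rewrite !inE /fires deg_inl.
Qed.

Lemma FA_le a b s : @FA a b s <= a.
Proof. by rewrite /FA; apply: leq_trans (max_card _) _; rewrite card_ord. Qed.
Lemma FB_le a b s : @FB a b s <= b.
Proof. by rewrite /FB; apply: leq_trans (max_card _) _; rewrite card_ord. Qed.

Lemma card_all n (P : pred 'I_n) : #|[pred w | P w]| = n -> forall w, P w.
Proof.
move=> h w.
have: [pred w | P w] =i predT.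
  apply/subset_cardP; first by rewrite h -[LHS](card_ord n).
  by apply/subsetP.
by move/(_ w); rewrite !inE.
Qed.

Lemma card_all' n (P : pred 'I_n) : (forall w, P w) -> #|[pred w | P w]| = n.
Proof.
by move=> h; rewrite -[RHS](card_ord n); apply: eq_card => w; rewrite !inE h.
Qed.


Definition Nf (x : nat -> nat) d t := \sum_(r < t) (d <= x r : nat).
Definition Cf (c : nat -> nat) t := \sum_(r < t) c r.

Lemma NfS x d t : Nf x d t.+1 = Nf x d t + (d <= x t).
Proof. by rewrite /Nf big_ord_recr. Qed.
Lemma CfS c t : Cf c t.+1 = Cf c t + c t.
Proof. by rewrite /Cf big_ord_recr. Qed.

Lemma vert_cons (x c : nat -> nat) d
  (rec : forall t, x t.+1 = x t - (if d <= x t then d else 0) + c t) t :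
  x t + d * Nf x d t = x 0 + Cf c t.
Proof.
elim: t => [|t IH]; first by rewrite /Nf /Cf !big_ord0 muln0 addn0.
rewrite NfS CfS rec addnA -IH mulnDr.
case: (leqP d (x t)) => h /=; clear IH rec; rewrite ?muln1 ?muln0; slia.
Qed.

Lemma vert_small (x c : nat -> nat) d
  (rec : forall t, x t.+1 = x t - (if d <= x t then d else 0) + c t)
  (hc : forall t, c t <= d) t : x t < 2 * d -> x t.+1 < 2 * d.
Proof.
move=> h; rewrite rec; have hct := hc t.
case: (leqP d (x t)) => h' /=; slia.
Qed.

Lemma vert_small_after (x c : nat -> nat) d
  (rec : forall t, x t.+1 = x t - (if d <= x t then d else 0) + c t)
  (hc : forall t, c t <= d) t t' : t <= t' -> x t < 2 * d -> x t' < 2 * d.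
Proof.
move=> /subnK <-; elim: (t' - t) => [//|k IH] h.
by rewrite addSn; apply: vert_small rec hc _ (IH h).
Qed.

Lemma vert_N (x c : nat -> nat) d (hd : 0 < d)
  (rec : forall t, x t.+1 = x t - (if d <= x t then d else 0) + c t) t :
  x t < 2 * d -> Nf x d t.+1 = (x 0 + Cf c t) %/ d.
Proof.
move=> h; rewrite -(vert_cons rec) NfS mulnC divnDMl //.
rewrite addnC; congr (_ + _).
case: (leqP d (x t)) => h' /=.
  have -> : x t = 1 * d + (x t - d) by slia.
  rewrite divnMDl // divn_small //; slia.
by rewrite divn_small.
Qed.

Lemma classic_min (P : nat -> Prop) :
  (exists n, P n) -> exists n, P n /\ forall m, m < n -> ~ P m.
Proof.
move=> [n Pn].
elim: n {-2}n (leqnn n) Pn => [|N IH] n hn Pn.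
  by exists n; split=> // m; rewrite (leqn0 n) in hn; rewrite (eqP hn).
case: (classic (exists m, m < n /\ P m)) => [[m [hm Pm]]|H].
  by apply: (IH m) => //; slia.
exists n; split=> // m hm Pm; apply: H; by exists m.
Qed.

Lemma vert_big (x c : nat -> nat) d
  (rec : forall t, x t.+1 = x t - (if d <= x t then d else 0) + c t)
  (hc : forall t, c t <= d) :
  (forall t, 2 * d <= x t) -> exists T, forall t, T <= t -> c t = d.
Proof.
move=> hb.
have dec t : x t.+1 <= x t.
  rewrite rec; have hbt := hb t; have hct := hc t; case: ifP => h /=; slia.
have [v [[T hT] hmin]] := classic_min (P := fun v => exists t, x t = v) (ex_intro _ (x 0) (ex_intro _ 0 erefl)).
have mon t t' : t <= t' -> x t' <= x t.
  move=> /subnK <-; elim: (t' - t) => [//|k IH].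
  by rewrite addSn; apply: leq_trans (dec _) IH.
have const t : T <= t -> x t = x T.
  move=> h; apply/eqP; rewrite eqn_leq mon //=.
  rewrite hT leqNgt; apply/negP => h'; by apply: (hmin _ h'); exists t.
exists T => t h.
have e : x t.+1 = x t by rewrite (const t h) const //; slia.
move: e; rewrite rec; have hbt := hb t; have hct := hc t; case: ifP => h' /= e; slia.
Qed.


Definition shift2 (f : nat -> nat) m m' := forall n, f (n + m) = f n + m'.
Definition monoP (f : nat -> nat) := forall x y, x <= y -> f x <= f y.

Lemma shift2_mul f m m' : shift2 f m m' -> forall n j, f (n + j * m) = f n + j * m'.
Proof.
move=> h n; elim=> [|j IH]; first by rewrite !mul0n !addn0.
have -> : n + j.+1 * m = (n + j * m) + m by rewrite mulSn; slia.
by rewrite h IH mulSn; slia.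
Qed.

Lemma shift2_iter f m : shift2 f m m -> forall k, shift2 (iter k f) m m.
Proof.
move=> h; elim=> [|k IH] n //=.
by rewrite IH h.
Qed.

Lemma mono_iter f : monoP f -> forall k, monoP (iter k f).
Proof. move=> h; elim=> [|k IH] x y hxy //=; by apply: h; apply: IH. Qed.

Lemma shift2_comp f g m1 m2 m3 :
  shift2 f m1 m2 -> shift2 g m2 m3 -> shift2 (fun n => g (f n)) m1 m3.
Proof. by move=> hf hg n; rewrite hf hg. Qed.

Lemma mono_comp f g : monoP f -> monoP g -> monoP (fun n => g (f n)).
Proof. by move=> hf hg x y h; apply: hg; apply: hf. Qed.

Lemma orbit_iter f (w : nat -> nat) (hw : forall s, w s.+1 = f (w s)) s k :
  w (k + s) = iter k f (w s).
Proof. by elim: k => [|k IH] //=; rewrite addSn hw IH. Qed.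

Lemma pigeon f m (hm : 0 < m) (hsh : shift2 f m m) (w : nat -> nat)
  (hw : forall s, w s.+1 = f (w s)) (hinc : forall s, w s <= w s.+1) :
  exists i d j, 0 < d <= m /\ forall s, i <= s -> w (s + d) = w s + j * m.
Proof.
pose g := fun k : 'I_m.+1 => (Ordinal (ltn_pmod (w k) hm) : 'I_m).
have: ~~ injectiveb g.
  apply/negP => /injectiveP /leq_card; rewrite !card_ord => h; slia.
move=> /injectivePn [k1 [k2 hne /(congr1 val) /= heq]].
have wmon : {homo w : i j / i <= j >-> i <= j}.
  by apply: homo_leq => //; [move=> ? ? ? ? ?; apply: leq_trans; eauto].
wlog hlt : k1 k2 hne heq / k1 < k2.
  move=> H; case: (ltngtP k1 k2) => h; first by apply: (H k1 k2).
    by apply: (H k2 k1) => //; rewrite eq_sym.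
  by move: hne; rewrite (val_inj h) eqxx.
have hle : w k1 <= w k2 by apply: wmon; apply: ltnW.
have hdvd : m %| w k2 - w k1.
  by rewrite -eqn_mod_dvd // heq.
exists k1, (k2 - k1), ((w k2 - w k1) %/ m); split.
  rewrite subn_gt0 hlt /=; have := ltn_ord k2 => hk2. slia.
move=> s hs.
have e1 : s + (k2 - k1) = (s - k1) + k2 by slia.
have e2 : s = (s - k1) + k1 by slia.
have eA : w (s + (k2 - k1)) = iter (s - k1) f (w k2) by rewrite e1 (orbit_iter hw).
have eB : w s = iter (s - k1) f (w k1) by rewrite {1}e2 (orbit_iter hw).
rewrite eA eB divnK //.
have -> : w k2 = w k1 + (w k2 - w k1) by slia.
rewrite -{1}(divnK hdvd) (shift2_mul (shift2_iter hsh (s - k1))). by rewrite divnK // addKn.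
Qed.

Lemma iter_lin T m (sh : shift2 T m m) z j :
  T z = z + j * m -> forall k, iter k T z = z + k * j * m.
Proof.
move=> h; elim=> [|k IH]; first by rewrite !mul0n addn0.
rewrite iterS IH (shift2_mul sh) h; slia.
Qed.

Lemma rotation T m (hm : 0 < m) (mono : monoP T) (sh : shift2 T m m) y y' j d e :
  T y = y + j * m -> y <= y' -> 0 < d -> iter d T y' = y' + e * m ->
  T y' = y' + j * m.
Proof.
move=> hy hyy hd he.
set q := (y' - y) %/ m; set r := (y' - y) %% m.
have hr : r < m by apply: ltn_pmod.
have ey' : y' = (y + q * m) + r by rewrite /r /q -addnA -divn_eq; slia.
have hy'' : T (y + q * m) = (y + q * m) + j * m.
  by rewrite (shift2_mul sh) hy; slia.
have hy3 : T (y + q * m + m) = (y + q * m + m) + j * m.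
  by rewrite sh hy''; slia.
have i1 := iter_lin sh hy'' d.
have i3 := iter_lin sh hy3 d.
have ede : e = d * j.
  have hrm : y + q * m + r <= y + q * m + m by rewrite leq_add2l ltnW.
  have m1 := mono_iter mono d (leq_addr r (y + q * m)).
  have m2 := mono_iter mono d hrm.
  rewrite -ey' he i1 in m1; rewrite -ey' he i3 in m2.
  move: m1 m2; case: (posnP r) => hr0.
    move=> _ _; move: he; rewrite ey' hr0 addn0 i1 => he'; slia.
  move=> m1 m2; clear -m1 m2 hr hr0 hm ey'; slia.
subst e.
have [hgt|hlt|//] := ltngtP (y' + j * m) (T y').
  have H k : y' + k.+1 * j * m < iter k.+1 T y'.
    elim: k => [|k IH]; first by rewrite mul1n.
    rewrite iterS; apply: leq_trans (mono _ _ (ltnW IH)).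
    rewrite (shift2_mul sh); move: hgt; slia.
  have := H d.-1; rewrite prednK // he; slia.
have H k : iter k.+1 T y' < y' + k.+1 * j * m.
  elim: k => [|k IH]; first by rewrite mul1n.
  rewrite iterS; apply: leq_ltn_trans (mono _ _ (ltnW IH)) _.
  rewrite (shift2_mul sh); move: hlt; slia.
have := H d.-1; rewrite prednK // he; slia.
Qed.


Definition st a b (s0 : position (Kab_vert a b)) t := iterU (Kab a b) t s0.
Definition FAt a b (s0 : position (Kab_vert a b)) t := FA (st s0 t).
Definition FBt a b (s0 : position (Kab_vert a b)) t := FB (st s0 t).
Definition Xc a b (s0 : position (Kab_vert a b)) := Cf (FAt s0).
Definition Yc a b (s0 : position (Kab_vert a b)) := Cf (FBt s0).

Lemma stS a b (s0 : position (Kab_vert a b)) t : st s0 t.+1 = step (Kab a b) (st s0 t).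
Proof. by []. Qed.
Lemma st0 a b (s0 : position (Kab_vert a b)) : st s0 0 = s0.
Proof. by []. Qed.

Lemma recA a b (s0 : position (Kab_vert a b)) (u : 'I_a) t :
  st s0 t.+1 (inl u) = st s0 t (inl u) - (if b <= st s0 t (inl u) then b else 0) + FBt s0 t.
Proof. by rewrite stS step_inl. Qed.
Lemma recB a b (s0 : position (Kab_vert a b)) (w : 'I_b) t :
  st s0 t.+1 (inr w) = st s0 t (inr w) - (if a <= st s0 t (inr w) then a else 0) + FAt s0 t.
Proof. by rewrite stS step_inr. Qed.

Lemma sum_bool_card n (P : pred 'I_n) : \sum_(u < n) (P u : nat) = #|[pred u | P u]|.
Proof.
rewrite -sum1_card [RHS]big_mkcond /=; apply: eq_bigr => u _; rewrite inE; by case: (P u).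
Qed.

Lemma sumN_A a b (s0 : position (Kab_vert a b)) t :
  \sum_(u < a) Nf (fun t => st s0 t (inl u)) b t = Xc s0 t.
Proof.
rewrite /Nf /Xc /Cf exchange_big /=; apply: eq_bigr => r _.
by rewrite sum_bool_card.
Qed.
Lemma sumN_B a b (s0 : position (Kab_vert a b)) t :
  \sum_(w < b) Nf (fun t => st s0 t (inr w)) a t = Yc s0 t.
Proof.
rewrite /Nf /Yc /Cf exchange_big /=; apply: eq_bigr => r _.
by rewrite sum_bool_card.
Qed.

Definition Gf k (c : 'I_k -> nat) d n := \sum_(i < k) (c i + n) %/ d.

Lemma Gf_shift k c d : 0 < d -> shift2 (@Gf k c d) d k.
Proof.
move=> hd n; rewrite /Gf.
rewrite (eq_bigr (fun i => (c i + n) %/ d + 1)); last first.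
  by move=> i _; rewrite addnA divnDr // divnn hd.
by rewrite big_split /= sum_nat_const card_ord muln1.
Qed.

Lemma Gf_mono k c d : monoP (@Gf k c d).
Proof.
move=> x y h; apply: leq_sum => i _; apply: leq_div2r; by rewrite leq_add2l.
Qed.

Lemma Cf_mono c : {homo Cf c : i j / i <= j}.
Proof.
apply: homo_leq => //; first by move=> ? ? ? ? ?; apply: leq_trans; eauto.
by move=> i; rewrite CfS leq_addr.
Qed.

Lemma hX a b (hb : 0 < b) (s0 : position (Kab_vert a b)) t0 :
  (forall u t, t0 <= t -> st s0 t (inl u) < 2 * b) ->
  forall t, t0 <= t -> Xc s0 t.+1 = Gf (fun u => s0 (inl u)) b (Yc s0 t).
Proof.
move=> hA t ht; rewrite -sumN_A /Gf; apply: eq_bigr => u _.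
by rewrite (vert_N hb (recA s0 u)) //; apply: hA.
Qed.

Lemma hY a b (ha : 0 < a) (s0 : position (Kab_vert a b)) t0 :
  (forall w t, t0 <= t -> st s0 t (inr w) < 2 * a) ->
  forall t, t0 <= t -> Yc s0 t.+1 = Gf (fun w => s0 (inr w)) a (Xc s0 t).
Proof.
move=> hB t ht; rewrite -sumN_B /Gf; apply: eq_bigr => w _.
by rewrite (vert_N ha (recB s0 w)) //; apply: hB.
Qed.


Lemma z_mul (z : nat -> nat) d c m i :
  (forall s, i <= s -> z (s + d) = z s + c * m) ->
  forall k s, i <= s -> z (s + k * d) = z s + k * c * m.
Proof.
move=> h; elim=> [|k IH] s hs; first by rewrite !mul0n !addn0.
have -> : s + k.+1 * d = (s + k * d) + d by rewrite mulSn; slia.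
rewrite h; last by rewrite (leq_trans hs) // leq_addr.
rewrite IH //; slia.
Qed.

Lemma iter_iter (f : nat -> nat) m n x : iter n (iter m f) x = iter (n * m) f x.
Proof. by rewrite iterM. Qed.

Lemma cancel_aux X Z s Y bN jb : X + (bN + jb) = s + (Y + jb) -> Z + bN = s + Y -> X = Z.
Proof. slia. Qed.

Lemma normal_case a b (ha : 0 < a) (hb : 0 < b) (s0 : position (Kab_vert a b)) t0 :
  (forall u t, t0 <= t -> st s0 t (inl u) < 2 * b) ->
  (forall w t, t0 <= t -> st s0 t (inr w) < 2 * a) ->
  exists q, [/\ 0 < q, q <= a, q <= b & eventually_periodic_with (Kab a b) s0 (2 * q)].
Proof.
move=> hA hB.
set G := Gf (fun u => s0 (inl u)) b.
set H := Gf (fun w => s0 (inr w)) a.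
have hXt : forall t, t0 <= t -> Xc s0 t.+1 = G (Yc s0 t) := hX hb hA.
have hYt : forall t, t0 <= t -> Yc s0 t.+1 = H (Xc s0 t) := hY ha hB.
have shG : shift2 G b a by apply: Gf_shift.
have shH : shift2 H a b by apply: Gf_shift.
have moG : monoP G by apply: Gf_mono.
have moH : monoP H by apply: Gf_mono.
pose psi := fun n => H (G n).
pose phi := fun n => G (H n).
have shpsi : shift2 psi b b by apply: shift2_comp shG shH.
have shphi : shift2 phi a a by apply: shift2_comp shH shG.
have mopsi : monoP psi by apply: mono_comp.
have Y2 t : t0 <= t -> Yc s0 t.+2 = psi (Yc s0 t).
  move=> ht; rewrite hYt; last by apply: leq_trans ht _.
  by rewrite hXt.
have Ymon := Cf_mono (FBt s0).
pose y s := Yc s0 (t0 + 2 * s).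
pose z s := Yc s0 (t0 + 2 * s).+1.
pose xp s := Xc s0 (t0 + 2 * s).+1.
have hy s : y s.+1 = psi (y s).
  rewrite /y -Y2; [congr (Yc s0 _); slia | exact: leq_addr].
have hz s : z s.+1 = psi (z s).
  rewrite /z -Y2; [congr (Yc s0 _); slia | exact: leq_trans (leq_addr _ _) (leqnSn _)].
have hxp s : xp s.+1 = phi (xp s).
  rewrite /xp /phi -hYt -?(hXt (t0 + 2 * s).+2); try (congr (Xc s0 _)); slia.

have hyx s : y s.+1 = H (xp s).
  rewrite /y /xp -hYt; [congr (Yc s0 _); slia | exact: leq_trans (leq_addr _ _) (leqnSn _)].
have incy s : y s <= y s.+1 by rewrite /y Ymon // leq_add2l leq_mul2l ltnW.
have incz s : z s <= z s.+1 by rewrite /z Ymon // ltnS leq_add2l leq_mul2l ltnW.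
have Xmon := Cf_mono (FAt s0).
have incx s : xp s <= xp s.+1 by rewrite /xp Xmon // ltnS leq_add2l leq_mul2l ltnW.
have [i1 [d1 [j1 [/andP [d1p d1b] hy1]]]] := pigeon hb shpsi hy incy.
have [i2 [d2 [j2 [/andP [d2p d2a] hx2]]]] := pigeon ha shphi hxp incx.
have hy2 s : i2.+1 <= s -> y (s + d2) = y s + j2 * b.
  case: s => [//|s] hs.
  by rewrite addSn !hyx hx2 // (shift2_mul shH).
pose P d := 0 < d /\ exists j S, forall s, S <= s -> y (s + d) = y s + j * b.
have [q [[qp [j [S hS]]] qmin]] := classic_min (P := P) (ex_intro _ d1 (conj d1p (ex_intro _ j1 (ex_intro _ i1 hy1)))).
have qb : q <= b.
  rewrite leqNgt; apply/negP => h; apply: (qmin d1 (leq_ltn_trans _ h)) => //.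
  by split=> //; exists j1, i1.
have qa : q <= a.
  rewrite leqNgt; apply/negP => h; apply: (qmin d2 (leq_ltn_trans _ h)) => //.
  by split=> //; exists j2, i2.+1.
exists q; split=> //.
have [i3 [d3 [c3 [/andP [d3p _] hz3]]]] := pigeon hb shpsi hz incz.
pose Tq := iter q psi.
have shT : shift2 Tq b b by apply: shift2_iter.
have moT : monoP Tq by apply: mono_iter.
have hTy : Tq (y S) = y S + j * b by rewrite /Tq -(orbit_iter hy) addnC hS.
have hzq s : maxn S i3 <= s -> z (s + q) = z s + j * b.
  move=> hs.
  have hs3 : i3 <= s by apply: leq_trans hs; apply: leq_maxr.
  have hsS : S <= s by apply: leq_trans hs; apply: leq_maxl.
  rewrite addnC (orbit_iter hz).
  apply: (rotation hb moT shT hTy _ d3p (e := q * c3)).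
    rewrite /y /z; apply: leq_trans (Ymon _ _ (leqnSn _)).
    by rewrite Ymon // leq_add2l leq_mul2l hsS orbT.
  rewrite /Tq iter_iter -(orbit_iter hz) addnC.
  rewrite [d3 * q]mulnC (z_mul hz3) //; slia.
set S' := maxn S i3.
have Yper t : t0 + 2 * S' <= t -> Yc s0 (t + 2 * q) = Yc s0 t + j * b.
  move=> ht.
  have ed := divn_eq (t - t0) 2.
  have hr := ltn_pmod (t - t0) (isT : 0 < 2).
  move: ed hr; set s := (t - t0) %/ 2; set r := (t - t0) %% 2 => ed hr.
  have hsS : S' <= s by slia.
  have ht' : t = t0 + 2 * s + r by slia.
  case: r ed hr ht' => [|[|//]] _ _ ->.
    have hsS0 : S <= s by apply: leq_trans hsS; apply: leq_maxl.
    have e := hS s hsS0; rewrite /y in e.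
    rewrite addn0; have -> : t0 + 2 * s + 2 * q = t0 + 2 * (s + q) by slia.
    exact: e.
  have := hzq s hsS; rewrite /z.
  have -> : t0 + 2 * s + 1 + 2 * q = (t0 + 2 * (s + q)).+1 by slia.
  by move=> ->; rewrite addn1.
have Xper t : t0 + 2 * S' <= t -> Xc s0 (t + 2 * q).+1 = Xc s0 t.+1 + j * a.
  move=> ht.
  have ht0 : t0 <= t by apply: leq_trans ht; apply: leq_addr.
  rewrite hXt; last by apply: leq_trans ht0 (leq_addr _ _).
  by rewrite Yper // (shift2_mul shG) hXt.
exists (t0 + 2 * S').+2 => t ht.
case: t ht => [//|t] ht.
have ht0 : t0 <= t by slia.
have e1 : Yc s0 (t + 2 * q) = Yc s0 t + j * b by apply: Yper; slia.
have e2 : Yc s0 (t + 2 * q).+1 = Yc s0 t.+1 + j * b.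
  by rewrite -addSn; apply: Yper; slia.
have f1 : Xc s0 (t + 2 * q) = Xc s0 t + j * a.
  case: t ht ht0 e1 e2 => [|t] ht ht0 e1 e2; first by slia.
  by rewrite addSn; apply: Xper; slia.
have f2 : Xc s0 (t + 2 * q).+1 = Xc s0 t.+1 + j * a by apply: Xper; slia.
rewrite /Yc in e1 e2; rewrite /Xc in f1 f2.
apply/ffunP => -[u|w].
  have c1 := vert_cons (recA s0 u) (t + 2 * q).+1.
  have c2 := vert_cons (recA s0 u) t.+1.
  rewrite (vert_N hb (recA s0 u)) in c1; last by apply: hA; apply: leq_trans ht0 (leq_addr _ _).
  rewrite (vert_N hb (recA s0 u)) in c2; last by apply: hA.
  rewrite e1 e2 addnA (divnDMl _ _ hb) in c1.
  change (st s0 (t.+1 + 2 * q) (inl u) = st s0 t.+1 (inl u)).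
  move: c1 c2; rewrite addSn; move: (_ %/ b) => N; move=> c1 c2; rewrite mulnDr [b * j]mulnC in c1; exact (cancel_aux c1 c2).
have c1 := vert_cons (recB s0 w) (t + 2 * q).+1.
have c2 := vert_cons (recB s0 w) t.+1.
rewrite (vert_N ha (recB s0 w)) in c1; last by apply: hB; apply: leq_trans ht0 (leq_addr _ _).
rewrite (vert_N ha (recB s0 w)) in c2; last by apply: hB.
rewrite f1 f2 addnA (divnDMl _ _ ha) in c1.
change (st s0 (t.+1 + 2 * q) (inr w) = st s0 t.+1 (inr w)).
move: c1 c2; rewrite addSn; move: (_ %/ a) => N; move=> c1 c2; rewrite mulnDr [a * j]mulnC in c1; exact (cancel_aux c1 c2).
Qed.


Lemma allB_fire a b (s0 : position (Kab_vert a b)) T :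
  (forall t, T <= t -> forall w, a <= st s0 t (inr w)) ->
  eventually_periodic_with (Kab a b) s0 1.
Proof.
move=> hB.
have fB t : T <= t -> FBt s0 t = b.
  by move=> ht; rewrite /FBt /FB card_all' // => w; apply: hB.
have hA t : T <= t -> forall u, b <= st s0 t.+1 (inl u).
  move=> ht u; rewrite recA fB //; case: ifP => h; slia.
have fA t : T < t -> FAt s0 t = a.
  case: t => [//|t] ht; rewrite /FAt /FA card_all' // => u; apply: hA.
  by rewrite -ltnS.
exists T.+1 => t ht; rewrite addn1.
change (st s0 t.+1 = st s0 t).
apply/ffunP => -[u|w].
  rewrite recA fB; last by slia.
  case: t ht => [//|t] ht.
  have htT : T <= t by slia.
  have h := hA t htT u; by rewrite h subnK.
have htT : T <= t by slia.
by rewrite recB fA ?(hB t htT) ?subnK ?(hB t htT) //; slia.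
Qed.

Lemma allA_fire a b (s0 : position (Kab_vert a b)) T :
  (forall t, T <= t -> forall u, b <= st s0 t (inl u)) ->
  forall t, T < t -> forall w, a <= st s0 t (inr w).
Proof.
move=> hA t ht w.
have fA t' : T <= t' -> FAt s0 t' = a.
  by move=> h; rewrite /FAt /FA card_all' // => u; apply: hA.
case: t ht => [//|t] ht.
rewrite recB fA //; case: ifP => h; slia.
Qed.

Lemma uniform_time (T : finType) (P : T -> nat -> Prop) :
  (forall i t t', t <= t' -> P i t -> P i t') ->
  (forall i, exists t, P i t) -> exists t0, forall i, P i t0.
Proof.
move=> mon ex.
suff: forall l : seq T, exists t0, forall i, i \in l -> P i t0.
  by case/(_ (enum T)) => t0 h; exists t0 => i; apply: h; rewrite mem_enum.
elim=> [|x l [t1 IH]]; first by exists 0.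
have [t2 h2] := ex x.
exists (maxn t1 t2) => i; rewrite inE => /orP [/eqP ->|hi].
  by apply: (mon x t2) => //; apply: leq_maxr.
by apply: (mon i t1); [apply: leq_maxl | apply: IH].
Qed.

Lemma ep_mul (V : finType) (e : rel V) s p T :
  (forall t, T <= t -> iterU e (t + p) s = iterU e t s) ->
  forall k t, T <= t -> iterU e (t + k * p) s = iterU e t s.
Proof.
move=> h; elim=> [|k IH] t ht; first by rewrite mul0n addn0.
have -> : t + k.+1 * p = (t + k * p) + p by rewrite mulSn; slia.
rewrite h; first exact: IH.
by rewrite (leq_trans ht) // leq_addr.
Qed.

Lemma period_dvd (V : finType) (e : rel V) s p n :
  is_period e s p -> eventually_periodic_with e s n -> p %| n.
Proof.
move=> [pp [[T1 h1] hmin]] [T2 h2].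
apply/negPn/negP => hn.
have r0 : 0 < n %% p by rewrite lt0n.
apply: (hmin (n %% p) r0 (ltn_pmod n pp)).
exists (maxn T1 T2) => t ht.
rewrite -(ep_mul h1 (n %/ p) (_ : T1 <= t + n %% p)); last first.
  by apply: leq_trans (leq_addr _ _); apply: leq_trans ht; apply: leq_maxl.
rewrite -addnA [n %% p + _]addnC -divn_eq h2 //.
by apply: leq_trans ht; apply: leq_maxr.
Qed.

Lemma upper_bound a b (ha : 0 < a) (hb : 0 < b) (s0 : position (Kab_vert a b)) p :
  is_period (Kab a b) s0 p ->
  exists i, [/\ 1 <= i, i <= minn a b & (p = i \/ p = 2 * i)].
Proof.
move=> hp.
have one : eventually_periodic_with (Kab a b) s0 1 ->
    exists i, [/\ 1 <= i, i <= minn a b & (p = i \/ p = 2 * i)].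
  move=> h1; have := period_dvd hp h1; rewrite dvdn1 => /eqP ->.
  by exists 1; split; [by [] | by rewrite leq_min ha hb | by left].
case: (classic (exists u : 'I_a, forall t, 2 * b <= st s0 t (inl u))) => [[u hu]|nA].
  have [T hT] := vert_big (recA s0 u) (fun t => FB_le _) hu.
  apply: one; apply: (allB_fire (T := T)) => t ht w.
  exact: (card_all (hT t ht)).
case: (classic (exists w : 'I_b, forall t, 2 * a <= st s0 t (inr w))) => [[w hw]|nB].
  have [T hT] := vert_big (recB s0 w) (fun t => FA_le _) hw.
  apply: one; apply: (allB_fire (T := T.+1)); apply: allA_fire => t ht u.
  exact: (card_all (hT t ht)).
have [tA htA] : exists t0, forall u : 'I_a, forall t, t0 <= t -> st s0 t (inl u) < 2 * b.
  apply: (uniform_time (P := fun u t0 => forall t, t0 <= t -> st s0 t (inl u) < 2 * b)).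
    by move=> i t t' htt h t'' ht''; apply: h; apply: leq_trans ht''.
  move=> u; have : ~ forall t, 2 * b <= st s0 t (inl u) by move=> h; apply: nA; exists u.
  move=> /not_all_ex_not [t ht]; exists t => t' ht'.
  apply: (vert_small_after (recA s0 u) (fun t => FB_le _) ht'); rewrite ltnNge; exact/negP.
have [tB htB] : exists t0, forall w : 'I_b, forall t, t0 <= t -> st s0 t (inr w) < 2 * a.
  apply: (uniform_time (P := fun w t0 => forall t, t0 <= t -> st s0 t (inr w) < 2 * a)).
    by move=> i t t' htt h t'' ht''; apply: h; apply: leq_trans ht''.
  move=> w; have : ~ forall t, 2 * a <= st s0 t (inr w) by move=> h; apply: nB; exists w.
  move=> /not_all_ex_not [t ht]; exists t => t' ht'.
  apply: (vert_small_after (recB s0 w) (fun t => FA_le _) ht'); rewrite ltnNge; exact/negP.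
have [q [qp qa qb hq]] := normal_case ha hb (t0 := maxn tA tB)
  (fun u t h => htA u t (leq_trans (leq_maxl _ _) h))
  (fun w t h => htB w t (leq_trans (leq_maxr _ _) h)).
have hd := period_dvd hp hq.
have pp : 0 < p by case: hp.
have qm : q <= minn a b by rewrite leq_min qa qb.
case: (boolP (odd p)) => hodd.
  exists p; split=> //; last by left.
  have : p %| q by rewrite -(@Gauss_dvdr p 2 q) // coprimen2 hodd.
  move/(dvdn_leq qp) => h; exact: leq_trans h qm.
have ep : p = 2 * p./2 by rewrite -[LHS]odd_double_half (negbTE hodd) add0n -mul2n.
exists p./2; split; last by right.
  by move: pp; rewrite {1}ep; case: (p./2).
have : p./2 %| q by rewrite -(@dvdn_pmul2l 2) // -ep.
move/(dvdn_leq qp) => h; exact: leq_trans h qm.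
Qed.


Ltac ifs := repeat match goal with |- context [if ?c then _ else _] =>
  lazymatch c with context [if _ then _ else _] => fail | _ => case: (boolP c) => ? end end.

Lemma pure_period (V : finType) (e : rel V) s p :
  0 < p -> iterU e p s = s -> (forall q, 0 < q -> q < p -> iterU e q s <> s) ->
  is_period e s p.
Proof.
move=> pp hp hq.
have hk k : iterU e (k * p) s = s.
  elim: k => [//|k IH]; rewrite mulSn addnC /iterU iterD.
  change (iter (k * p) (step e) (iterU e p s) = s); by rewrite hp.
split=> //; split.
  exists 0 => t _; rewrite /iterU iterD.
  change (iter t (step e) (iterU e p s) = iterU e t s); by rewrite hp.
move=> q qp qlt [T hT].
apply: (hq q qp qlt).
have := hT (T * p) (leq_pmulr _ pp).
rewrite hk /iterU addnC iterD.
change (iter q (step e) (iterU e (T * p) s) = s -> iterU e q s = s).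
by rewrite hk.
Qed.

Definition mkpos a b (i : nat) (fA fB : nat -> nat) : position (Kab_vert a b) :=
  [ffun v : Kab_vert a b => match v with inl u => fA (minn u (i - 1)) | inr w => fB (minn w (i - 1)) end].

Lemma mkpos_inl a b i fA fB (u : 'I_a) : mkpos a b i fA fB (inl u) = fA (minn u (i - 1)).
Proof. by rewrite ffunE. Qed.
Lemma mkpos_inr a b i fA fB (w : 'I_b) : mkpos a b i fA fB (inr w) = fB (minn w (i - 1)).
Proof. by rewrite ffunE. Qed.

Lemma step_mk a b i fA fB fA' fB' :
  (forall g, g <= i - 1 -> fA' g = fA g - (if b <= fA g then b else 0) +
       #|[pred w : 'I_b | a <= fB (minn w (i - 1))]|) ->
  (forall h, h <= i - 1 -> fB' h = fB h - (if a <= fB h then a else 0) +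
       #|[pred u : 'I_a | b <= fA (minn u (i - 1))]|) ->
  step (Kab a b) (mkpos a b i fA fB) = mkpos a b i fA' fB'.
Proof.
move=> hA hB; apply/ffunP => -[u|w].
  rewrite step_inl !mkpos_inl hA ?geq_minr //; congr (_ + _).
  by apply: eq_card => w; rewrite !inE mkpos_inr.
rewrite step_inr !mkpos_inr hB ?geq_minr //; congr (_ + _).
by apply: eq_card => u; rewrite !inE mkpos_inl.
Qed.

Lemma card_ge n m : m <= n -> #|[pred w : 'I_n | m <= w]| = n - m.
Proof.
move=> hmn; rewrite -sum_bool_card -(big_mkord xpredT (fun w => (m <= w : nat))).
rewrite (big_cat_nat (leq0n m) hmn) /=.
rewrite big_nat_cond big1 ?add0n; last first.
  by move=> w /andP [/andP [_ hw] _]; rewrite leqNgt hw.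
rewrite (eq_big_nat _ _ (F2 := fun _ => 1)); last by move=> w /andP [-> _].
by rewrite sum_nat_const_nat muln1.
Qed.

Lemma cnt_fire n i (f : nat -> nat) thr k : 0 < i -> i <= n -> k <= i - 1 ->
  (forall g, g <= i - 1 -> (thr <= f g) = (g == k)) ->
  #|[pred w : 'I_n | thr <= f (minn w (i - 1))]| = if k < i - 1 then 1 else n - (i - 1).
Proof.
move=> ip iin hk hf.
rewrite (eq_card (B := [pred w : 'I_n | minn w (i - 1) == k])); last first.
  by move=> w; rewrite !inE hf // geq_minr.
case: ifP => hk'.
  have kn : k < n by slia.
  rewrite (eq_card (B := pred1 (Ordinal kn))) ?card1 // => w.
  rewrite !inE; apply/idP/idP.
    move=> h; apply/eqP; apply: val_inj => /=; move: h.
    rewrite /minn; case: ifP => ? ?; slia.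
  move/eqP => -> /=; rewrite /minn hk'; by [].
have -> : k = i - 1 by slia.
rewrite -(@card_ge n (i - 1)); last by slia.
apply: eq_card => w; rewrite !inE.
rewrite /minn; case: ifP => h; apply/idP/idP => ?; slia.
Qed.

Lemma cnt_none n i (f : nat -> nat) thr :
  (forall g, g <= i - 1 -> (thr <= f g) = false) ->
  #|[pred w : 'I_n | thr <= f (minn w (i - 1))]| = 0.
Proof.
move=> hf; apply: eq_card0 => w; rewrite !inE hf //; exact: geq_minr.
Qed.


Definition Av d t g := if t <= g then d - g + t else t - g.

Lemma Av_fire d i t g : 0 < i -> i <= d -> t <= i - 1 -> g <= i - 1 ->
  (d <= Av d t g) = (g == t).
Proof. move=> *; rewrite /Av; case: ifP => ?; apply/idP/idP => ?; slia. Qed.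

Lemma P1_step a b i t : 0 < i -> i <= a -> i <= b -> t <= i - 1 ->
  step (Kab a b) (mkpos a b i (Av b t) (Av a t)) =
  mkpos a b i (Av b (if t < i - 1 then t.+1 else 0)) (Av a (if t < i - 1 then t.+1 else 0)).
Proof.
move=> ip ia ib ht.
have cA : #|[pred u : 'I_a | b <= Av b t (minn u (i - 1))]| = if t < i - 1 then 1 else a - (i - 1).
  apply: cnt_fire => // h hh; exact: (Av_fire ip ib ht hh).
have cB : #|[pred u : 'I_b | a <= Av a t (minn u (i - 1))]| = if t < i - 1 then 1 else b - (i - 1).
  apply: cnt_fire => // h hh; exact: (Av_fire ip ia ht hh).
apply: step_mk => g hg; rewrite ?cA ?cB /Av; ifs; slia.
Qed.

Lemma P1_period a b i : 0 < i -> i <= a -> i <= b ->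
  is_period (Kab a b) (mkpos a b i (Av b 0) (Av a 0)) i.
Proof.
move=> ip ia ib.
set s0 := mkpos a b i (Av b 0) (Av a 0).
have it t : t <= i - 1 -> iterU (Kab a b) t s0 = mkpos a b i (Av b t) (Av a t).
  elim: t => [//|t IH] ht.
  rewrite /iterU iterS -/(iterU _ t s0) IH; last by slia.
  rewrite P1_step //; last by slia.
  have -> : t < i - 1 by slia.
  by [].
apply: pure_period => //.
  have -> : i = (i - 1).+1 by slia.
  rewrite /iterU iterS -/(iterU _ (i - 1) s0) it // P1_step //.
  by rewrite ltnn.
move=> q qp qi; rewrite it; last by slia.
move=> h; have := congr1 (fun s : position (Kab_vert a b) => s (inl (Ordinal (leq_trans ip ia)))) h.
rewrite /s0 !mkpos_inl /= /minn /Av; ifs; slia.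
Qed.


Definition EB a k h := if k <= h then a - 1 - h + k else k - h - 1.
Definition OA b k g := if k < g then b - g + k else k - g.
Definition OB a i k h :=
  if k <= h then a - 1 - h + (if k < i - 1 then k.+1 else a)
  else (if k < i - 1 then k.+1 else a) - h - 1.

Lemma P2_step1 a b i k : 0 < i -> i <= a -> i <= b -> k <= i - 1 ->
  step (Kab a b) (mkpos a b i (Av b k) (EB a k)) = mkpos a b i (OA b k) (OB a i k).
Proof.
move=> ip ia ib hk.
have cA : #|[pred u : 'I_a | b <= Av b k (minn u (i - 1))]| = if k < i - 1 then 1 else a - (i - 1).
  apply: cnt_fire => // h hh; exact: (Av_fire ip ib hk hh).
have cB : #|[pred u : 'I_b | a <= EB a k (minn u (i - 1))]| = 0.
  apply: cnt_none => h hh; rewrite /EB; ifs; apply/negbTE; slia.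
apply: step_mk => g hg; rewrite ?cA ?cB /Av /EB /OA /OB; ifs; slia.
Qed.

Lemma P2_step2 a b i k : 0 < i -> i <= a -> i <= b -> k <= i - 1 ->
  step (Kab a b) (mkpos a b i (OA b k) (OB a i k)) =
  mkpos a b i (Av b (if k < i - 1 then k.+1 else 0)) (EB a (if k < i - 1 then k.+1 else 0)).
Proof.
move=> ip ia ib hk.
have cA : #|[pred u : 'I_a | b <= OA b k (minn u (i - 1))]| = 0.
  apply: cnt_none => h hh; rewrite /OA; ifs; apply/negbTE; slia.
have cB : #|[pred u : 'I_b | a <= OB a i k (minn u (i - 1))]| = if k < i - 1 then 1 else b - (i - 1).
  apply: cnt_fire => // h hh; rewrite /OB; ifs; apply/idP/idP => ?; slia.
apply: step_mk => g hg; rewrite ?cA ?cB /Av /EB /OA /OB; ifs; slia.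
Qed.

Lemma P2_period a b i : 0 < i -> i <= a -> i <= b ->
  is_period (Kab a b) (mkpos a b i (Av b 0) (EB a 0)) (2 * i).
Proof.
move=> ip ia ib.
set s0 := mkpos a b i (Av b 0) (EB a 0).
have itE k : k <= i - 1 -> iterU (Kab a b) (2 * k) s0 = mkpos a b i (Av b k) (EB a k).
  elim: k => [//|k IH] hk.
  have -> : 2 * k.+1 = (2 * k).+2 by slia.
  rewrite /iterU !iterS -/(iterU _ (2 * k) s0) IH; last by slia.
  rewrite P2_step1 //; last by slia.
  rewrite P2_step2 //; last by slia.
  have -> : k < i - 1 by slia.
  by [].
have itO k : k <= i - 1 -> iterU (Kab a b) (2 * k).+1 s0 = mkpos a b i (OA b k) (OB a i k).
  move=> hk; rewrite /iterU iterS -/(iterU _ (2 * k) s0) itE // P2_step1 //.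
apply: pure_period => //; first by slia.
  have -> : 2 * i = (2 * (i - 1)).+2 by slia.
  rewrite /iterU iterS -/(iterU _ (2 * (i - 1)).+1 s0) itO // P2_step2 //.
  by rewrite ltnn.
move=> q qp qi.
have ed := divn_eq q 2.
have hr := ltn_pmod q (isT : 0 < 2).
move: ed hr; set k := q %/ 2; set r := q %% 2 => ed hr.
have -> : q = if r == 0 then 2 * k else (2 * k).+1.
  by case: r ed hr => [|[|//]] /= ->; slia.
move=> h; have := congr1 (fun s : position (Kab_vert a b) => s (inl (Ordinal (leq_trans ip ia)))) h.
case: ifP => hr0.
  rewrite itE; last by slia.
  rewrite /s0 !mkpos_inl /= /minn /Av; ifs; slia.
rewrite itO; last by slia.
rewrite /s0 !mkpos_inl /= /minn /Av /OA; ifs; slia.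
Qed.


Theorem theorem3p8 (a b : nat) (ha : 0 < a) (hb : 0 < b) (p : nat) (hp : 0 < p) :
  (exists s : position (Kab_vert a b), is_period (Kab a b) s p) <->
  (exists i, [/\ 1 <= i, i <= minn a b & (p = i \/ p = 2 * i)]).
Proof.
split.
  by move=> [s hs]; apply: (upper_bound ha hb hs).
move=> [i [i1 im hpi]].
move: im; rewrite leq_min => /andP [ia ib].
case: hpi => ->.
  by exists (mkpos a b i (Av b 0) (Av a 0)); apply: P1_period.
by exists (mkpos a b i (Av b 0) (EB a 0)); apply: P2_period.
Qed.
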